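(* For every integer $n\ge0$, with the polynomial matrix $M(x)$ defined below, $\operatorname{Pf}M(x)=(-1)^n\operatorname{Pf}M(-2n-1-x)$ as polynomials in $x$.
   Context: For an indeterminate $y$ and integer $k\ge0$, $\binom yk=y(y-1)\cdots(y-k+1)/k!$. For integers $i,j\ge1$ define the polynomials $R_{i,j}(x)=\sum_{\ell=0}^{i-1}\frac{j-i}{i}\binom{j-1}{i-1-\ell}\binom{\ell+j}{\ell}\binom{2x+2n+2}{\ell+j+1}$ (for integers $x\ge0$ this equals $\sum_{t=1}^{2x+2n+1}\frac{j-i}{t}\binom ti\binom tj$) and $T_{i,j}(x)=\binom{2x+2n+1}{i}\big(\binom{x+n}{j}+\binom{x+n+1}{j}\big)$. $M(x)$ is the $(2n+2)\times(2n+2)$ skew-symmetric matrix with $M_{i,j}(x)=R_{i,j}(x)+T_{i,j}(x)-T_{j,i}(x)$ for $1\le i,j\le 2n+1$ and $M_{i,2n+2}(x)=\binom{x+n}{i-1}$ for $1\le i\le 2n+1$. *)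

(* Defs.v *)
From HB Require Import structures.
From mathcomp Require Import all_boot all_order all_algebra all_fingroup.
Set Implicit Arguments. Unset Strict Implicit. Unset Printing Implicit Defensive.
Import Order.TTheory GRing.Theory Num.Theory.
Local Open Scope ring_scope.

Definition binomP (y : {poly rat}) (k : nat) : {poly rat} :=
  ((k`!)%:R : rat)^-1 *: \prod_(i < k) (y - i%:R).

Lemma pf_lt0 m (i : 'I_m) : (i.*2 < m.*2)%N.
Proof. by rewrite ltn_double. Qed.
Lemma pf_lt1 m (i : 'I_m) : (i.*2.+1 < m.*2)%N.
Proof. by rewrite -doubleS leq_double. Qed.

Definition pfaffian (R : comUnitRingType) (m : nat) (A : 'M[R]_(m.*2)) : R :=
  ((2 ^ m * m`!)%N%:R)^-1 *
  \sum_(s : 'S_(m.*2))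
     (-1) ^+ odd_perm s *
     \prod_(i < m) A (s (Ordinal (pf_lt0 i))) (s (Ordinal (pf_lt1 i))).

(* R_{i,j}(x), 1-based indices i j >= 1 *)
Definition Rij (n : nat) (x : {poly rat}) (i j : nat) : {poly rat} :=
  \sum_(l < i)
    (((j%:R - i%:R) / i%:R : rat) * ('C(j.-1, i.-1 - l))%:R * ('C(l + j, l))%:R)
      *: binomP (2%:R * x + (2 * n + 2)%:R) (l + j + 1).

Definition Tij (n : nat) (x : {poly rat}) (i j : nat) : {poly rat} :=
  binomP (2%:R * x + (2 * n + 1)%:R) i *
  (binomP (x + n%:R) j + binomP (x + n%:R + 1) j).

(* Entry M_{a,b}(x) with 1-based indices 1 <= a, b <= 2n+2 *)
Definition Mentry (n : nat) (x : {poly rat}) (a b : nat) : {poly rat} :=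
  if (a <= 2 * n + 1)%N && (b <= 2 * n + 1)%N then
    Rij n x a b + Tij n x a b - Tij n x b a
  else if (a <= 2 * n + 1)%N then binomP (x + n%:R) a.-1
  else if (b <= 2 * n + 1)%N then - binomP (x + n%:R) b.-1
  else 0.

(* The (2n+2) x (2n+2) matrix M(x); row/column k : 'I_(2n+2) is paper index k+1 *)
Definition Mmat (n : nat) (x : {poly rat}) : 'M[{poly rat}]_((n.+1).*2) :=
  \matrix_(a, b) Mentry n x a.+1 b.+1.

(* Main.v *)
Require Import Defs.
From HB Require Import structures.
From mathcomp Require Import all_boot all_order all_algebra all_fingroup.
From mathcomp Require Import ring.
Set Implicit Arguments. Unset Strict Implicit. Unset Printing Implicit Defensive.
Import Order.TTheory GRing.Theory Num.Theory.
Local Open Scope ring_scope.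



Section PfLaw.
Variable R : comUnitRingType.

Lemma prod_double_nat (F : nat -> R) m :
  \prod_(0 <= p < m.*2) F p = \prod_(0 <= i < m) (F i.*2 * F i.*2.+1).
Proof.
elim: m => [|m IH]; first by rewrite !big_geq.
by rewrite doubleS !big_nat_recr //= IH mulrA.
Qed.

Lemma prod_double m (h : 'I_(m.*2) -> R) :
  \prod_(p : 'I_(m.*2)) h p =
  \prod_(i < m) (h (Ordinal (pf_lt0 i)) * h (Ordinal (pf_lt1 i))).
Proof.
pose F p := if insub p is Some q then h q else 1.
have FE (q : 'I_(m.*2)) : F q = h q by rewrite /F valK.
transitivity (\prod_(p < m.*2) F p); first by apply: eq_bigr => q _; rewrite FE.
rewrite -(big_mkord xpredT F) prod_double_nat big_mkord.
apply: eq_bigr => i _; rewrite -!FE //.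
Qed.

Variable m : nat.
Local Notation K := 'I_(m.*2).
Local Notation ev i := (Ordinal (pf_lt0 i)).
Local Notation od i := (Ordinal (pf_lt1 i)).

Lemma half_lt (p : K) : (p./2 < m)%N.
Proof. by rewrite ltn_half_double. Qed.
Definition half (p : K) : 'I_m := Ordinal (half_lt p).

Definition gf (f : {ffun 'I_m -> K * K}) (p : K) : K :=
  if odd p then (f (half p)).2 else (f (half p)).1.

Lemma gf_ev f i : gf f (ev i) = (f i).1.
Proof.
rewrite /gf /= odd_double; congr (f _).1; apply: val_inj => /=.
by rewrite doubleK.
Qed.
Lemma gf_od f i : gf f (od i) = (f i).2.
Proof.
rewrite /gf /= odd_double /=; congr (f _).2; apply: val_inj => /=.
by have := half_bit_double i true; rewrite add1n.
Qed.

Definition permOf (g : K -> K) : 'S_(m.*2) :=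
  match injectiveP g with ReflectT inj => perm inj | ReflectF _ => 1%g end.
Lemma permOfE g : injective g -> permOf g =1 g.
Proof.
move=> ig x; rewrite /permOf; case: injectiveP => [ig'|] /=; first by rewrite permE.
by [].
Qed.

Definition ffOf (s : 'S_(m.*2)) : {ffun 'I_m -> K * K} :=
  [ffun i => (s (ev i), s (od i))].

Lemma gf_ffOf s : gf (ffOf s) =1 s.
Proof.
move=> p; rewrite /gf !ffunE /=; case: ifP => op /=; congr (s _); apply: val_inj => /=;
  by rewrite -[RHS]odd_double_half op.
Qed.

Lemma entry_PAPT (P A : 'M[R]_(m.*2)) u v :
  (P *m A *m P^T) u v = \sum_(q : K * K) (P u q.1 * A q.1 q.2 * P v q.2).
Proof.
rewrite !mxE -(pair_bigA _ (fun k l => P u k * A k l * P v l)) /= exchange_big /=.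
apply: eq_bigr => l _; rewrite ?mxE mulr_suml; apply: eq_bigr => k _.
by rewrite ?mxE.
Qed.

Lemma det_sel (P : 'M[R]_(m.*2)) (g : K -> K) :
  \sum_(s : 'S_(m.*2)) (-1) ^+ s * \prod_(p : K) P (s p) (g p) =
  if injectiveb g then (-1) ^+ permOf g * \det P else 0.
Proof.
have -> : \sum_(s : 'S_(m.*2)) (-1) ^+ s * \prod_(p : K) P (s p) (g p) =
   \det (\matrix_(p, u) P u (g p)).
  by rewrite /determinant; apply: eq_bigr => s _; congr (_ * _); apply: eq_bigr => p _; rewrite mxE.
case: injectiveP => [ig|nig].
  have -> : \matrix_(p, u) P u (g p) = row_perm (permOf g) P^T.
    by apply/matrixP => p u; rewrite !mxE permOfE.
  by rewrite row_permE det_mulmx det_perm det_tr.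
have : [exists p1, exists p2, (p1 != p2) && (g p1 == g p2)].
  apply: contraT => H; exfalso; apply: nig => x y exy; apply/eqP; apply: contraTT H => nxy.
  rewrite negbK; apply/existsP; exists x; apply/existsP; exists y; by rewrite nxy exy eqxx.
case/existsP => p1 /existsP [p2 /andP [ne12 /eqP e12]].
apply: (determinant_alternate ne12) => u; by rewrite !mxE e12.
Qed.

Lemma inj_ffOf s : injectiveb (gf (ffOf s)).
Proof. by apply/injectiveP => x y; rewrite !gf_ffOf; apply: perm_inj. Qed.
Lemma permOf_ffOf s : permOf (gf (ffOf s)) = s.
Proof. by apply/permP => x; rewrite permOfE ?gf_ffOf //; apply/injectiveP/inj_ffOf. Qed.

Lemma pf_congr (P A : 'M[R]_(m.*2)) :
  pfaffian (P *m A *m P^T) = \det P * pfaffian A.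
Proof.
rewrite /pfaffian mulrCA; congr (_ * _).
transitivity (\sum_(s : 'S_(m.*2)) \sum_(f : {ffun 'I_m -> K * K})
   (-1)^+s * ((\prod_i A (f i).1 (f i).2) * \prod_(p : K) P (s p) (gf f p))).
  apply: eq_bigr => s _.
  rewrite (eq_bigr (fun i => \sum_(q : K*K) P (s (ev i)) q.1 * A q.1 q.2 * P (s (od i)) q.2));
    last by move=> i _; rewrite entry_PAPT.
  rewrite bigA_distr_bigA /= mulr_sumr; apply: eq_bigr => f _; congr (_ * _).
  rewrite (prod_double (fun p => P (s p) (gf f p))) -big_split /=.
  by apply: eq_bigr => i _; rewrite gf_ev gf_od [P _ _ * _]mulrC -mulrA.
rewrite exchange_big /=.
transitivity (\sum_(f : {ffun 'I_m -> K * K}) (\prod_i A (f i).1 (f i).2) *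
   (if injectiveb (gf f) then (-1) ^+ permOf (gf f) * \det P else 0)).
  apply: eq_bigr => f _; rewrite -det_sel mulr_sumr; apply: eq_bigr => s _.
  by rewrite mulrCA.
rewrite (bigID (fun f => injectiveb (gf f))) /= [X in _ + X]big1 ?addr0; last first.
  by move=> f /negbTE ->; rewrite mulr0.
rewrite (reindex_onto ffOf (fun f => permOf (gf f))) /=; last first.
  move=> f /injectiveP ig; apply/ffunP => i; rewrite ffunE !permOfE // gf_ev gf_od.
  by case: (f i).
rewrite mulr_sumr; apply: eq_big => [s|s _].
  by rewrite inj_ffOf permOf_ffOf eqxx.
rewrite inj_ffOf permOf_ffOf.
rewrite (eq_bigr (fun i => A (s (ev i)) (s (od i)))); last by move=> i _; rewrite ffunE.
by rewrite mulrC -mulrA mulrCA.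
Qed.
End PfLaw.



Definition gbin (r : rat) (k : nat) : rat := (k`!%:R)^-1 * \prod_(i < k) (r - i%:R).

Lemma fact_neq0 k : (k`!%:R : rat) != 0.
Proof. by rewrite pnatr_eq0 -lt0n fact_gt0. Qed.
Lemma natS_neq0 k : (k.+1%:R : rat) != 0.
Proof. by rewrite pnatr_eq0. Qed.

Lemma gbin0 r : gbin r 0 = 1.
Proof. by rewrite /gbin big_ord0 fact0 invr1 mulr1. Qed.

Lemma gbinS r k : k.+1%:R * gbin r k.+1 = gbin r k * (r - k%:R).
Proof.
rewrite /gbin big_ord_recr /= factS natrM invfM.
have h1 := natS_neq0 k.
by field; rewrite fact_neq0 addrC natr1 h1.
Qed.

Lemma gbin_shift r k : r * gbin (r - 1) k = k.+1%:R * gbin r k.+1.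
Proof.
rewrite /gbin big_ord_recl /= factS natrM invfM subr0.
have -> : \prod_(i < k) (r - (bump 0 i)%:R) = \prod_(i < k) (r - 1 - i%:R).
  by apply: eq_bigr => i _; rewrite /bump /= natrD opprD addrA.
have h1 := natS_neq0 k.
by field; rewrite fact_neq0 addrC natr1 h1.
Qed.

Lemma gbin_pascal r k : gbin (r + 1) k.+1 = gbin r k.+1 + gbin r k.
Proof.
have h1 := natS_neq0 k.
apply: (mulfI h1); rewrite -[LHS]gbin_shift addrK mulrDr gbinS.
ring.
Qed.

Lemma gbin_mulr r k : r * gbin r k = k.+1%:R * gbin r k.+1 + k%:R * gbin r k.
Proof. rewrite gbinS; ring. Qed.

Lemma gbin_refl r k : gbin (- r) k = (-1) ^+ k * gbin (r + k%:R - 1) k.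
Proof.
elim: k => [|k IH]; first by rewrite !gbin0 expr0 mulr1.
have h1 := natS_neq0 k.
apply: (mulfI h1); rewrite gbinS IH [RHS]mulrCA -gbin_shift.
have -> : r + k.+1%:R - 1 - 1 = r + k%:R - 1 by rewrite -addn1 natrD; ring.
rewrite exprS; ring.
Qed.

Lemma gbin0_S k : gbin 0 k.+1 = 0.
Proof. by rewrite /gbin big_ord_recl /= subr0 mul0r mulr0. Qed.

Lemma gbin1_SS k : gbin 1 k.+2 = 0.
Proof.
have h1 := natS_neq0 k.+1.
apply: (mulfI h1); rewrite -gbin_shift subrr gbin0_S; ring.
Qed.

Lemma vand_exact z p q :
  \sum_(c < p.+1) 'C(p, c)%:R * gbin z (c + q) = gbin (z + p%:R) (p + q).
Proof.
elim: p q => [|p IH] q.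
  by rewrite big_ord1 bin0 mul1r addr0.
rewrite big_ord_recl bin0 mul1r.
rewrite (eq_bigr (fun c : 'I_p.+1 => 'C(p, c.+1)%:R * gbin z (c.+1 + q) +
                                   'C(p, c)%:R * gbin z (c + q.+1))); last first.
  by move=> c _; rewrite lift0 binS natrD mulrDl addnS addSn.
rewrite big_split /= IH addrA.
have -> : gbin z (0 + q) + \sum_(i < p.+1) 'C(p, i.+1)%:R * gbin z (i.+1 + q) =
          \sum_(c < p.+2) 'C(p, c)%:R * gbin z (c + q).
  by rewrite [RHS]big_ord_recl bin0 mul1r; congr (_ + _); apply: eq_bigr => i _; rewrite lift0.
rewrite big_ord_recr /= bin_small // mul0r addr0 IH addnS -natr1 addrA.
by rewrite gbin_pascal addrC.
Qed.

Lemma vand z p q N : (p < N)%N ->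
  \sum_(c < N) 'C(p, c)%:R * gbin z (c + q) = gbin (z + p%:R) (p + q).
Proof.
move=> hpN; rewrite -(subnKC hpN) big_split_ord /= [X in _ + X]big1 ?addr0.
  exact: vand_exact.
by move=> i _; rewrite bin_small ?mul0r //= ltnS leq_addr.
Qed.

Lemma binL n t : t.+1%:R * ('C(n, t.+1)%:R : rat) = (n%:R - t%:R) * 'C(n, t)%:R.
Proof.
have := mul_bin_left n t; move/(congr1 (fun x => x%:R : rat)); rewrite !natrM => ->.
case: (leqP t n) => htn; first by rewrite natrB.
by rewrite bin_small // !mulr0.
Qed.

Lemma binD n m : n.+1%:R * ('C(n, m)%:R : rat) = m.+1%:R * 'C(n.+1, m.+1)%:R.
Proof.
by have := mul_bin_diag n.+1 m; move/(congr1 (fun x => x%:R : rat)); rewrite !natrM.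
Qed.

Definition ca (i j l : nat) : rat :=
  if l is l'.+1 then ('C(j + l', l') * 'C(j, i - l'))%:R * (j + l)%:R else 0.
Definition cb (i j l : nat) : rat :=
  if (l <= i)%N then ('C(j + l, l) * 'C(j, i - l))%:R * ((j + l)%:R - i%:R) else 0.

Lemma coef_id i j l : (l <= i.+1)%N ->
  (i.+1 * ('C(j + l, l) * 'C(j, i.+1 - l)))%:R = ca i j l + cb i j l.
Proof.
rewrite /ca /cb; case: l => [|l] hl.
  rewrite leq0n !addn0 !bin0 !mul1n subn0 add0r natrM.
  by rewrite subn0 binL mulrC.
rewrite leq_eqVlt in hl; case/orP: hl => [/eqP [->]|hl].
  by rewrite ltnn !subnn !bin0 !muln1 addr0 natrM !addnS [RHS]mulrC binD mulrC.
rewrite ltnS in hl; rewrite hl.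
have [t ->] : exists t, i = (l + t).+1 by exists (i - l.+1)%N; rewrite -addSn subnKC.
have s1 : ((l + t).+2 - l.+1 = t.+1)%N by rewrite subSS -addnS addKn.
have s2 : ((l + t).+1 - l = t.+1)%N by rewrite -addnS addKn.
have s3 : ((l + t).+1 - l.+1 = t)%N by rewrite subSS addKn.
rewrite s1 s2 s3 !natrM !addnS.
have e1 := binD (j + l) l.
have e2 := binL j t.
apply/eqP; rewrite -subr_eq0; apply/eqP.
transitivity (- ('C(j, t.+1)%:R * ((j + l).+1%:R * 'C(j + l, l)%:R - l.+1%:R * 'C((j + l).+1, l.+1)%:R))
   + 'C((j + l).+1, l.+1)%:R * (t.+1%:R * 'C(j, t.+1)%:R - (j%:R - t%:R) * 'C(j, t)%:R) : rat).
  ring.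
by rewrite e1 e2 !subrr !mulr0 oppr0 addr0.
Qed.

Lemma gbin_prod z i j : gbin z i * gbin z j =
  \sum_(l < i.+1) ('C(j + l, l) * 'C(j, i - l))%:R * gbin z (j + l).
Proof.
elim: i => [|i IH].
  by rewrite big_ord1 gbin0 mul1r /= !addn0 !bin0 mul1r.
apply: (mulfI (natS_neq0 i)).
transitivity (\sum_(l < i.+1) (('C(j + l, l) * 'C(j, i - l))%:R *
     (j + l).+1%:R * gbin z (j + l).+1 + cb i j l * gbin z (j + l))).
  rewrite mulrA gbinS -mulrA [(_ - _) * gbin z j]mulrC mulrA IH mulr_suml; apply: eq_bigr => l _.
  have hl : (l <= i)%N by rewrite -ltnS.
  rewrite /cb hl.
  have := gbin_mulr z (j + l).
  move=> e.
  transitivity (('C(j + l, l) * 'C(j, i - l))%:R * (z * gbin z (j + l) - i%:R * gbin z (j + l)) : rat).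
    ring.
  rewrite e; ring.
rewrite mulr_sumr.
transitivity (\sum_(l < i.+2) (ca i j l + cb i j l) * gbin z (j + l)).
  symmetry; rewrite (eq_bigr (fun l : 'I_i.+2 => ca i j l * gbin z (j + l) + cb i j l * gbin z (j + l)));
    last by move=> l _; rewrite mulrDl.
  rewrite big_split /= [X in X + _ = _]big_ord_recl [X in _ + X = _]big_ord_recr /=.
  have -> : cb i j i.+1 = 0 by rewrite /cb ltnn.
  rewrite !mul0r add0r addr0 -big_split /=; apply: eq_bigr => l _.
  by rewrite !add0n (_ : bump 0 l = l.+1) // addnS.
apply: eq_bigr => l _; rewrite -coef_id ?natrM ?mulrA //.
by rewrite -ltnS.
Qed.

Definition dA (p q l : nat) : rat :=
  if l is l'.+1 then ('C(q, p - l') * 'C(l' + q.+1, l'))%:R * (q.+1 + l)%:R else 0.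
Definition dB (p q l : nat) : rat :=
  if (l < p.+1)%N then ('C(q, p - l) * 'C(l + q.+1, l))%:R * (q.+1 + l)%:R else 0.

Lemma coef_id2 p q l : (l <= p.+1)%N ->
  (p.+1 * ('C(q.+1 + l, l) * 'C(q.+1, p.+1 - l)))%:R = dA p q l + dB p q l.
Proof.
rewrite /dA /dB; case: l => [|l] hl.
  rewrite ltnS leq0n !addn0 !bin0 !mul1n muln1 subn0 add0r natrM !subn0.
  by rewrite [RHS]mulrC binD.
rewrite leq_eqVlt in hl; case/orP: hl => [/eqP [->]|hl].
  rewrite ltnn !subnn !bin0 !muln1 mul1n addr0 natrM [RHS]mulrC addnC.
  by rewrite addSn binD.
rewrite hl; rewrite ltnS in hl.
have [t ->] : exists t, p = (l + t).+1 by exists (p - l.+1)%N; rewrite -addSn subnKC.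
have s1 : ((l + t).+2 - l.+1 = t.+1)%N by rewrite subSS -addnS addKn.
have s2 : ((l + t).+1 - l = t.+1)%N by rewrite -addnS addKn.
have s3 : ((l + t).+1 - l.+1 = t)%N by rewrite subSS addKn.
rewrite s1 s2 s3 !natrM.
have e1 := binD (q.+1 + l) l.
have e2 := binL q t.
rewrite [(l + q.+1)%N]addnC [(l.+1 + q.+1)%N]addnC !addnS (binS q t) natrD.
apply/eqP; rewrite -subr_eq0; apply/eqP.
transitivity (- ('C(q, t.+1)%:R * ((q.+1 + l).+1%:R * 'C(q.+1 + l, l)%:R - l.+1%:R * 'C((q.+1 + l).+1, l.+1)%:R))
   + 'C((q.+1 + l).+1, l.+1)%:R * (t.+1%:R * 'C(q, t.+1)%:R - (q%:R - t%:R) * 'C(q, t)%:R) : rat).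
  ring.
by rewrite e1 e2 !subrr !mulr0 oppr0 addr0.
Qed.

Definition cc (i j l : nat) : rat :=
  ((j%:R - i%:R) / i%:R : rat) * ('C(j.-1, i.-1 - l))%:R * ('C(l + j, l))%:R.

Lemma L1 z p q :
  \sum_(l < p.+1) cc p.+1 q.+1 l * gbin z (l + q.+1) =
  gbin z p.+1 * gbin (z - 1) q - gbin (z - 1) p * gbin z q.+1.
Proof.
have [->|z0] := eqVneq z 0.
  rewrite big1 => [|l _]; last by rewrite addnS gbin0_S mulr0.
  by rewrite !gbin0_S mul0r mulr0 subrr.
apply: (mulfI z0).
set c := ((q.+1%:R - p.+1%:R) / p.+1%:R : rat).
transitivity (c * \sum_(l < p.+2) (dA p q l + dB p q l) * gbin z (q.+1 + l)).
  symmetry; rewrite [RHS]mulr_sumr mulr_sumr (eq_bigr (fun l : 'I_p.+2 => c * (dA p q l * gbin z (q.+1 + l)) +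
      c * (dB p q l * gbin z (q.+1 + l)))); last by move=> l _; rewrite -mulrDr -mulrDl.
  rewrite big_split /= [X in X + _ = _]big_ord_recl [X in _ + X = _]big_ord_recr /=.
  have -> : dB p q p.+1 = 0 by rewrite /dB ltnn.
  rewrite !mul0r mulr0 add0r addr0 -big_split /=; apply: eq_bigr => l _.
  rewrite /dA /dB ltn_ord /cc /= (_ : bump 0 l = l.+1) // add0n.
  have e := gbin_mulr z (l + q.+1).
  transitivity (c * (('C(q, p - l) * 'C(l + q.+1, l))%:R * (z * gbin z (l + q.+1)))); last first.
    rewrite -/c !natrM; ring.
  rewrite e [(l + q.+1)%N]addnC !addnS natrM; ring.
transitivity ((q.+1%:R - p.+1%:R) * (gbin z p.+1 * gbin z q.+1)).
  rewrite gbin_prod mulr_sumr [RHS]mulr_sumr; apply: eq_bigr => l _.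
  rewrite -coef_id2; last by rewrite -ltnS.
  rewrite /c natrM; field.
  by rewrite addrC natr1 natS_neq0.
transitivity (gbin z p.+1 * (z * gbin (z - 1) q) - (z * gbin (z - 1) p) * gbin z q.+1).
  by rewrite !gbin_shift; ring.
ring.
Qed.

Definition Qq (z : rat) (i j : nat) : rat := \sum_(l < i) cc i j l * gbin z (l + j + 1).
Definition sQ (z : rat) (i j : nat) : rat :=
  gbin z i * gbin (z - 1) j.-1 - gbin (z - 1) i.-1 * gbin z j.

Lemma Qdiff z p q : Qq (z + 1) p.+1 q.+1 - Qq z p.+1 q.+1 = sQ z p.+1 q.+1.
Proof.
rewrite /Qq /sQ -sumrB -L1 /=; apply: eq_bigr => l _.
by rewrite -mulrBr addn1 gbin_pascal addrAC subrr add0r.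
Qed.

Lemma Q1 i q : Qq 1 i q.+1 = 0.
Proof. by rewrite /Qq big1 // => l _; rewrite addn1 addnS gbin1_SS mulr0. Qed.

Definition Pc (a c : nat) : rat := (-1) ^+ a * 'C(a, c)%:R.

Lemma PV1 N a w : (a < N)%N ->
  \sum_(c < N) Pc a c * gbin w c.+1 = - gbin (- w) a.+1.
Proof.
move=> haN; rewrite gbin_refl.
transitivity ((-1) ^+ a * \sum_(c < N) 'C(a, c)%:R * gbin w (c + 1)%N).
  by rewrite mulr_sumr; apply: eq_bigr => c _; rewrite /Pc addn1 -mulrA.
rewrite vand // addn1 exprS mulN1r mulNr opprK.
by congr (_ * gbin _ _); rewrite -natr1; ring.
Qed.

Lemma PV0 N a w : (a < N)%N ->
  \sum_(c < N) Pc a c * gbin w c = gbin (- w - 1) a.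
Proof.
move=> haN; rewrite -opprD gbin_refl.
transitivity ((-1) ^+ a * \sum_(c < N) 'C(a, c)%:R * gbin w (c + 0)%N).
  by rewrite mulr_sumr; apply: eq_bigr => c _; rewrite /Pc addn0 -mulrA.
rewrite vand // addn0.
by congr (_ * gbin _ _); ring.
Qed.

Lemma dsum_split N (u v f g : nat -> rat) :
  \sum_(c < N) \sum_(d < N) u c * v d * (f c * g d) =
  (\sum_(c < N) u c * f c) * (\sum_(d < N) v d * g d).
Proof.
rewrite mulr_suml; apply: eq_bigr => c _; rewrite mulr_sumr; apply: eq_bigr => d _.
ring.
Qed.

Definition PQ N a b z : rat :=
  \sum_(c < N) \sum_(d < N) Pc a c * Pc b d * Qq z c.+1 d.+1.

Lemma PQ_step N a b z : (a < N)%N -> (b < N)%N ->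
  PQ N a b (z + 1) - Qq (2 - (z + 1)) a.+1 b.+1 = PQ N a b z - Qq (2 - z) a.+1 b.+1.
Proof.
move=> haN hbN.
apply/eqP; rewrite -subr_eq0; apply/eqP.
have e1 : PQ N a b (z + 1) - PQ N a b z =
  \sum_(c < N) \sum_(d < N) Pc a c * Pc b d * sQ z c.+1 d.+1.
  rewrite /PQ -sumrB; apply: eq_bigr => c _; rewrite -sumrB; apply: eq_bigr => d _.
  by rewrite -mulrBr Qdiff.
have e2 : Qq (2 - z) a.+1 b.+1 - Qq (2 - (z + 1)) a.+1 b.+1 = sQ (1 - z) a.+1 b.+1.
  by rewrite -Qdiff; congr (Qq _ _ _ - Qq _ _ _); ring.
have e3 : \sum_(c < N) \sum_(d < N) Pc a c * Pc b d * sQ z c.+1 d.+1 =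
   (- gbin (- z) a.+1) * gbin (- z) b - gbin (- z) a * (- gbin (- z) b.+1).
  rewrite /sQ.
  transitivity (\sum_(c < N) \sum_(d < N) Pc a c * Pc b d * (gbin z c.+1 * gbin (z - 1) d)
     - \sum_(c < N) \sum_(d < N) Pc a c * Pc b d * (gbin (z - 1) c * gbin z d.+1)).
    rewrite -sumrB; apply: eq_bigr => c _; rewrite -sumrB; apply: eq_bigr => d _.
    by rewrite -mulrBr.
  rewrite (dsum_split N (Pc a) (Pc b) (fun c => gbin z c.+1) (fun d => gbin (z - 1) d)).
  rewrite (dsum_split N (Pc a) (Pc b) (fun c => gbin (z - 1) c) (fun d => gbin z d.+1)).
  rewrite !PV1 // !PV0 //.
  by have -> : - (z - 1) - 1 = - z by ring.
transitivity ((PQ N a b (z + 1) - PQ N a b z) + (Qq (2 - z) a.+1 b.+1 - Qq (2 - (z + 1)) a.+1 b.+1)).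
  ring.
rewrite e1 e2 e3 /sQ /=.
have -> : 1 - z = - z + 1 by ring.
have -> : - z + 1 - 1 = - z by ring.
rewrite !gbin_pascal; ring.
Qed.

Lemma PQ_nat N a b k : (a < N)%N -> (b < N)%N ->
  PQ N a b k.+1%:R = Qq (2 - k.+1%:R) a.+1 b.+1.
Proof.
move=> haN hbN; apply/eqP; rewrite -subr_eq0; apply/eqP.
elim: k => [|k IH].
  rewrite /PQ big1 ?sub0r => [|c _]; last by rewrite big1 // => d _; rewrite Q1 mulr0.
  by rewrite (_ : 2 - 1 = 1) ?Q1 ?oppr0 //; ring.
by rewrite -natr1 PQ_step.
Qed.



Lemma hornerNat (n : nat) (t : rat) : ((n%:R : {poly rat}).[t]) = n%:R.
Proof. by rewrite hornerMn -polyC1 hornerC. Qed.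

Lemma binomP_eval y k t : (binomP y k).[t] = gbin y.[t] k.
Proof.
rewrite /binomP hornerZ horner_prod /gbin; congr (_ * _); apply: eq_bigr => i _.
by rewrite hornerD hornerN hornerNat.
Qed.

Definition RQ n (t : rat) (i j : nat) : rat :=
  \sum_(l < i) cc i j l * gbin (2%:R * t + (2 * n + 2)%:R) (l + j + 1).
Definition TQ n (t : rat) (i j : nat) : rat :=
  gbin (2%:R * t + (2 * n + 1)%:R) i * (gbin (t + n%:R) j + gbin (t + n%:R + 1) j).
Definition MQ n (t : rat) (a b : nat) : rat :=
  if (a <= 2 * n + 1)%N && (b <= 2 * n + 1)%N then
    RQ n t a b + TQ n t a b - TQ n t b a
  else if (a <= 2 * n + 1)%N then gbin (t + n%:R) a.-1
  else if (b <= 2 * n + 1)%N then - gbin (t + n%:R) b.-1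
  else 0.

Lemma hA2 (x : {poly rat}) c t : (2 * x + c%:R).[t] = 2 * x.[t] + c%:R.
Proof. by rewrite hornerD hornerM !hornerNat. Qed.
Lemma hA1 (x : {poly rat}) c t : (x + c%:R).[t] = x.[t] + c%:R.
Proof. by rewrite hornerD hornerNat. Qed.
Lemma hA1' (x : {poly rat}) c t : (x + c%:R + 1).[t] = x.[t] + c%:R + 1.
Proof. by rewrite !hornerD hornerNat -polyC1 hornerC. Qed.

Lemma Mentry_eval n x a b t : (Mentry n x a b).[t] = MQ n x.[t] a b.
Proof.
rewrite /Mentry /MQ.
case: ifP => _.
  rewrite /Rij /Tij /RQ /TQ !(hornerD, hornerN, hornerM) horner_sum !binomP_eval.
  rewrite !hA2 !hA1' !hA1; congr (_ + _ - _).
  by apply: eq_bigr => l _; rewrite hornerZ binomP_eval hA2.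
case: ifP => _; first by rewrite binomP_eval hA1.
case: ifP => _; first by rewrite hornerN binomP_eval hA1.
by rewrite horner0.
Qed.

Definition Pq n (a c : nat) : rat := if (a < 2 * n + 1)%N then Pc a c else (c == 2 * n + 1)%N%:R.

Lemma PcN a N : (a < N)%N -> Pc a N = 0.
Proof. by move=> h; rewrite /Pc bin_small // mulr0. Qed.

Lemma sum_last n (F : nat -> rat) :
  \sum_(c < (n.+1).*2) F c = \sum_(c < 2 * n + 1) F c + F (2 * n + 1)%N.
Proof.
rewrite -!(big_mkord xpredT) (_ : (n.+1).*2 = (2 * n + 1).+1)%N; last first.
  by rewrite doubleS -mul2n addn1.
by rewrite big_nat_recr.
Qed.

Lemma args n t :
  [/\ 2 * (- (2 * n + 1)%:R - t) + (2 * n + 2)%:R = 2 - (2 * t + (2 * n + 2)%:R),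
      2 * (- (2 * n + 1)%:R - t) + (2 * n + 1)%:R = - (2 * t + (2 * n + 1)%:R),
      - (2 * n + 1)%:R - t + n%:R = - (t + n%:R) - 1 &
      - (2 * n + 1)%:R - t + n%:R + 1 = - (t + n%:R) :> rat].
Proof. by split; rewrite ?natrD ?natrM; ring. Qed.

Lemma dsum_lin N (w X Y Z : nat -> nat -> rat) :
  \sum_(c < N) \sum_(d < N) w c d * (X c d + Y c d - Z c d) =
  \sum_(c < N) \sum_(d < N) w c d * X c d + \sum_(c < N) \sum_(d < N) w c d * Y c d
  - \sum_(c < N) \sum_(d < N) w c d * Z c d.
Proof.
rewrite -big_split -sumrB; apply: eq_bigr => c _.
rewrite -big_split -sumrB; apply: eq_bigr => d _; by rewrite mulrBr mulrDr.
Qed.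

Lemma PVh N b y : (b < N)%N ->
  \sum_(d < N) Pc b d * (gbin y d.+1 + gbin (y + 1) d.+1) =
  - gbin (- y) b.+1 - gbin (- (y + 1)) b.+1.
Proof.
move=> hb; rewrite -(PV1 y hb) -(PV1 (y + 1) hb) -big_split /=.
by apply: eq_bigr => d _; rewrite mulrDr.
Qed.

Lemma inner n t k a b : 2 * t + (2 * n + 2)%:R = k.+1%:R ->
  (a < 2 * n + 1)%N -> (b < 2 * n + 1)%N ->
  MQ n (- (2 * n + 1)%:R - t) a.+1 b.+1 =
  \sum_(c < 2 * n + 1) \sum_(d < 2 * n + 1) Pc a c * Pc b d * MQ n t c.+1 d.+1.
Proof.
move=> hz ha hb.
have [e1 e2 e3 e4] := args n t.
rewrite /MQ ha hb /=.
rewrite (eq_bigr (fun c : 'I_(2 * n + 1) => \sum_(d < 2 * n + 1) Pc a c * Pc b d *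
   (RQ n t c.+1 d.+1 + TQ n t c.+1 d.+1 - TQ n t d.+1 c.+1))); last first.
  by move=> c _; apply: eq_bigr => d _; rewrite !ltn_ord.
rewrite (dsum_lin (2 * n + 1) (fun c d => Pc a c * Pc b d)
   (fun c d => RQ n t c.+1 d.+1) (fun c d => TQ n t c.+1 d.+1) (fun c d => TQ n t d.+1 c.+1)) /=.
congr (_ + _ - _).
- by rewrite /RQ e1 hz -[LHS]/(Qq (2 - k.+1%:R) a.+1 b.+1) -(PQ_nat k ha hb).
- rewrite /TQ (dsum_split (2 * n + 1) (Pc a) (Pc b) (fun c => gbin (2 * t + (2 * n + 1)%:R) c.+1)
     (fun d => gbin (t + n%:R) d.+1 + gbin (t + n%:R + 1) d.+1)).
  rewrite PV1 // PVh // e2 e4 e3 [- (t + n%:R + 1)]opprD; ring.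
- rewrite /TQ.
  under [RHS]eq_bigr => c _ do under eq_bigr => d _ do rewrite [gbin _ d.+1 * _]mulrC.
  rewrite (dsum_split (2 * n + 1) (Pc a) (Pc b)
     (fun c => gbin (t + n%:R) c.+1 + gbin (t + n%:R + 1) c.+1)
     (fun d => gbin (2 * t + (2 * n + 1)%:R) d.+1)).
  rewrite PV1 // PVh // e2 e4 e3 [- (t + n%:R + 1)]opprD; ring.
Qed.

Lemma MQ_NN n t : MQ n t (2 * n + 1).+1 (2 * n + 1).+1 = 0.
Proof. by rewrite /MQ ltnn. Qed.
Lemma MQ_cN n t c : (c < 2 * n + 1)%N -> MQ n t c.+1 (2 * n + 1).+1 = gbin (t + n%:R) c.
Proof. by move=> h; rewrite /MQ ltnn h. Qed.
Lemma MQ_Nd n t d : (d < 2 * n + 1)%N -> MQ n t (2 * n + 1).+1 d.+1 = - gbin (t + n%:R) d.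
Proof. by move=> h; rewrite /MQ ltnn h. Qed.

Lemma Pq_NN n : Pq n (2 * n + 1) (2 * n + 1) = 1.
Proof. by rewrite /Pq ltnn eqxx. Qed.
Lemma Pq_Nc n c : (c < 2 * n + 1)%N -> Pq n (2 * n + 1) c = 0.
Proof. by move=> h; rewrite /Pq ltnn (ltn_eqF h). Qed.
Lemma Pq_lt n a c : (a < 2 * n + 1)%N -> Pq n a c = Pc a c.
Proof. by move=> h; rewrite /Pq h. Qed.
Lemma Pq_aN n a : (a < 2 * n + 1)%N -> Pq n a (2 * n + 1) = 0.
Proof. by move=> h; rewrite Pq_lt // PcN. Qed.

Lemma NMnat n t k a b : 2 * t + (2 * n + 2)%:R = k.+1%:R ->
  (a <= 2 * n + 1)%N -> (b <= 2 * n + 1)%N ->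
  MQ n (- (2 * n + 1)%:R - t) a.+1 b.+1 =
  \sum_(d < 2 * n + 1) (\sum_(c < 2 * n + 1) Pq n a c * MQ n t c.+1 d.+1
      + Pq n a (2 * n + 1) * MQ n t (2 * n + 1).+1 d.+1) * Pq n b d
  + (\sum_(c < 2 * n + 1) Pq n a c * MQ n t c.+1 (2 * n + 1).+1
      + Pq n a (2 * n + 1) * MQ n t (2 * n + 1).+1 (2 * n + 1).+1) * Pq n b (2 * n + 1).
Proof.
move=> hz; have [e1 e2 e3 e4] := args n t.
rewrite leq_eqVlt => /orP [/eqP -> | ha]; rewrite leq_eqVlt => /orP [/eqP -> | hb].
- rewrite !MQ_NN Pq_NN mulr1 mulr0 addr0 big1 ?add0r; last first.
    by move=> d _; rewrite Pq_Nc // mulr0.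
  by rewrite big1 // => c _; rewrite Pq_Nc // mul0r.
- rewrite MQ_Nd // e3 Pq_NN (Pq_lt _ hb) PcN // mulr0 addr0.
  rewrite (eq_bigr (fun d : 'I_(2 * n + 1) => - (Pc b d * gbin (t + n%:R) d))); last first.
    move=> d _; rewrite big1 ?add0r; last by move=> c _; rewrite Pq_Nc // mul0r.
    by rewrite mul1r MQ_Nd // Pq_lt // mulrC mulrN.
  by rewrite sumrN PV0 // -opprD.
- rewrite MQ_cN // e3 Pq_NN (Pq_aN ha) mul0r addr0 mulr1.
  rewrite big1 ?add0r; last by move=> d _; rewrite Pq_Nc // mulr0.
  rewrite (eq_bigr (fun c : 'I_(2 * n + 1) => Pc a c * gbin (t + n%:R) c)); last first.
    by move=> c _; rewrite MQ_cN // Pq_lt.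
  by rewrite PV0 // -opprD.
- rewrite (inner hz ha hb) (Pq_aN hb) mulr0 addr0.
  rewrite exchange_big /=; apply: eq_bigr => d _.
  rewrite (Pq_aN ha) mul0r addr0 mulr_suml; apply: eq_bigr => c _.
  by rewrite !Pq_lt // mulrAC.
Qed.



Lemma poly_eq_pts (p q : {poly rat}) (f : nat -> rat) :
  injective f -> (forall k, p.[f k] = q.[f k]) -> p = q.
Proof.
move=> finj hpq; apply/eqP; rewrite -subr_eq0; apply/negPn/negP => H.
have := max_poly_roots H (rs := map f (iota 0 (size (p - q)))).
rewrite size_map size_iota ltnn => h.
suff : false by [].
apply: h.
  by apply/allP => x /mapP [k _ ->]; rewrite /root hornerD hornerN hpq subrr.
by rewrite map_inj_uniq // iota_uniq.
Qed.

Definition Pmat n : 'M[{poly rat}]_((n.+1).*2) := \matrix_(a, c) (Pq n a c)%:P.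

Lemma entry_eval n (a b : 'I_((n.+1).*2)) t :
  ((Pmat n *m Mmat n 'X *m (Pmat n)^T) a b).[t] =
  \sum_(d < (n.+1).*2) (\sum_(c < (n.+1).*2) Pq n a c * MQ n t c.+1 d.+1) * Pq n b d.
Proof.
rewrite !mxE horner_sum; apply: eq_bigr => d _.
rewrite !mxE hornerM horner_sum hornerC; congr (_ * _); apply: eq_bigr => c _.
by rewrite !mxE hornerM hornerC Mentry_eval hornerX.
Qed.

Definition tk n (k : nat) : rat := (k.+1%:R - (2 * n + 2)%:R) / 2.

Lemma tk_inj n : injective (tk n).
Proof.
move=> k1 k2; rewrite /tk => /(mulIf _) h.
have /h : (2 : rat) != 0 by [].
by move/addIr/eqP; rewrite eqr_nat eqSS => /eqP.
Qed.

Lemma tk_hz n k : 2 * tk n k + (2 * n + 2)%:R = k.+1%:R.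
Proof. by rewrite /tk mulrC divfK // subrK. Qed.

Lemma Mrefl n : Mmat n (- (2 * n + 1)%:R - 'X) = Pmat n *m Mmat n 'X *m (Pmat n)^T.
Proof.
apply/matrixP => a b; apply: (poly_eq_pts (@tk_inj n)) => k.
rewrite entry_eval mxE Mentry_eval hornerD !hornerN hornerNat hornerX.
have hN : ((n.+1).*2 = (2 * n + 1).+1)%N by rewrite doubleS -mul2n addn1.
have ha : (a <= 2 * n + 1)%N by rewrite -ltnS -hN.
have hb : (b <= 2 * n + 1)%N by rewrite -ltnS -hN.
rewrite (NMnat (tk_hz n k) ha hb).
rewrite (sum_last n (fun d => (\sum_(c < (n.+1).*2) Pq n a c * MQ n (tk n k) c.+1 d.+1) * Pq n b d)).
congr (_ + _).
  apply: eq_bigr => d _.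
  by rewrite (sum_last n (fun c => Pq n a c * MQ n (tk n k) c.+1 d.+1)).
by rewrite (sum_last n (fun c => Pq n a c * MQ n (tk n k) c.+1 (2 * n + 1).+1)).
Qed.

Lemma prod_sign n : \prod_(i < (2 * n + 1)%N) ((-1) ^+ i : rat) = (-1) ^+ n.
Proof.
rewrite -(big_mkord xpredT (fun i => (-1) ^+ i : rat)).
elim: n => [|n IH]; first by rewrite big_nat1 expr0.
have -> : (2 * n.+1 + 1 = (2 * n + 1).+2)%N by rewrite mulnS.
rewrite !big_nat_recr //= IH -!mulrA -exprD exprS.
by rewrite addnS addnn -mul2n exprS exprM sqrrN !expr1n mulr1 mulrC.
Qed.

Lemma det_Pmat n : \det (Pmat n) = (-1) ^+ n.
Proof.
have hN : ((n.+1).*2 = (2 * n + 1).+1)%N by rewrite doubleS -mul2n addn1.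
rewrite det_trig; last first.
  apply/forallP => i; apply/forallP => j; apply/implyP => hij.
  have hi : (i < 2 * n + 1)%N.
    by apply: (leq_trans hij); rewrite -ltnS -hN.
  by rewrite mxE Pq_lt // /Pc bin_small // mulr0.
transitivity ((\prod_(i < (n.+1).*2) Pq n i i)%:P).
  by rewrite rmorph_prod; apply: eq_bigr => i _; rewrite mxE.
rewrite -(big_mkord xpredT (fun i => Pq n i i)) hN.
rewrite big_nat_recr //= Pq_NN mulr1 big_mkord.
rewrite (eq_bigr (fun i : 'I_(2 * n + 1)%N => (-1) ^+ i : rat)); last first.
  by move=> i _; rewrite Pq_lt // /Pc binn mulr1.
by rewrite prod_sign rmorphXn /= polyCN polyC1.
Qed.

Theorem mainTheorem10 (n : nat) :
  pfaffian (Mmat n 'X) =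
  (-1) ^+ n * pfaffian (Mmat n (- (2 * n + 1)%:R - 'X)).
Proof.
rewrite Mrefl pf_congr det_Pmat mulrA -expr2 sqrr_sign mul1r.
by [].
Qed.
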